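(* Let $\theta>1$ be real and $n$ a positive integer. Then $n\in\mathcal A_\theta$ if and only if both \[\left\{\frac{2n}{\log\theta}\right\}\geq 1-2f\!\left(\frac{\log\theta}{n}\right)\quad\text{and}\quad \left\{\frac{n}{\log\theta}\right\}<1-f\!\left(\frac{\log\theta}{n}\right).\]
   Context: $\lfloor x\rfloor$ is the floor and $\{x\}=x-\lfloor x\rfloor$ the fractional part; $\log$ is the natural logarithm. $M'_\theta(n)=\left\lfloor 1/(\theta^{1/n}-1)\right\rfloor$ and $\mathcal A_\theta=\{n\in\mathbb N: M'_\theta(n)\neq \lfloor n/\log\theta-1/2\rfloor\}$. For $t>0$, $f(t)=\frac{1}{e^t-1}-\frac1t+\frac12$. *)

(* Defs.v *)
From Stdlib Require Import Reals Lra Lia ZArith.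
Open Scope R_scope.

(* floor x : the greatest integer <= x.  (Stdlib's [up x] is the least integer > x.) *)
Definition floor (x : R) : Z := (up x - 1)%Z.

Definition frac (x : R) : R := x - IZR (floor x).

Definition Mprime (theta : R) (n : nat) : Z :=
  floor (1 / (Rpower theta (1 / INR n) - 1)).

Definition inA (theta : R) (n : nat) : Prop :=
  Mprime theta n <> floor (INR n / ln theta - 1 / 2).

Definition fbar (t : R) : R := 1 / (exp t - 1) - 1 / t + 1 / 2.

(* Main.v *)
From Stdlib Require Import Reals Lra Lia ZArith.
Require Import Defs.
Open Scope R_scope.

Lemma floor_unique (k : Z) (x : R) : IZR k <= x < IZR k + 1 -> floor x = k.
Proof.
  intros [H1 H2]. unfold floor.
  assert (up x = (k + 1)%Z) as E.
  { symmetry. apply tech_up; rewrite plus_IZR; lra. }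
  rewrite E. lia.
Qed.

Lemma floor_spec (x : R) : IZR (floor x) <= x < IZR (floor x) + 1.
Proof.
  unfold floor. rewrite minus_IZR. destruct (archimed x). simpl. lra.
Qed.

Lemma g_deriv (c : R) :
  derivable_pt_lim (fun s => exp (- s) * (1 + s) - exp s * (1 - s)) c
    (c * (exp c - exp (- c))).
Proof.
  assert (H1 : derivable_pt_lim (fun s => exp (- s)) c (exp (- c) * (-1))).
  { apply (derivable_pt_lim_comp (fun s => - s) exp c (-1) (exp (-c))).
    - replace (-1) with (- (1)) by ring. apply derivable_pt_lim_opp, derivable_pt_lim_id.
    - apply derivable_pt_lim_exp. }
  assert (H2 : derivable_pt_lim (fun s => 1 + s) c (0 + 1)).
  { apply derivable_pt_lim_plus; [apply derivable_pt_lim_const | apply derivable_pt_lim_id]. }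
  assert (H3 : derivable_pt_lim (fun s => 1 - s) c (0 - 1)).
  { apply derivable_pt_lim_minus; [apply derivable_pt_lim_const | apply derivable_pt_lim_id]. }
  pose proof (derivable_pt_lim_mult _ _ c _ _ H1 H2) as H4.
  pose proof (derivable_pt_lim_mult _ _ c _ _ (derivable_pt_lim_exp c) H3) as H5.
  pose proof (derivable_pt_lim_minus _ _ c _ _ H4 H5) as H6.
  unfold mult_fct, minus_fct in H6.
  replace (c * (exp c - exp (- c))) with
    (exp (- c) * (-1) * (1 + c) + exp (- c) * (0 + 1) -
     (exp c * (1 - c) + exp c * (0 - 1))) by ring.
  exact H6.
Qed.

Lemma key_ineq (t : R) : 0 < t -> exp t * (2 - t) < 2 + t.
Proof.
  intro Ht. set (s := t / 2).
  assert (Hs : 0 < s) by (unfold s; lra).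
  destruct (MVT_cor2 _ _ 0 s Hs (fun c _ => g_deriv c)) as [c [Hc [Hc0 Hcs]]].
  rewrite Ropp_0, exp_0 in Hc.
  assert (exp (- c) < exp c) by (apply exp_increasing; lra).
  assert (Hg : exp (- s) * (1 + s) - exp s * (1 - s) > 0).
  { assert (c * (exp c - exp (- c)) * (s - 0) > 0).
    { apply Rmult_gt_0_compat; [apply Rmult_gt_0_compat|]; lra. }
    lra. }
  assert (Et : exp t = exp s * exp s) by (rewrite <- exp_plus; f_equal; unfold s; lra).
  assert (Es : exp s * exp (- s) = 1) by (rewrite <- exp_plus, Rplus_opp_r, exp_0; reflexivity).
  assert (Hp : exp s > 0) by apply exp_pos.
  assert (exp s * (exp (- s) * (1 + s) - exp s * (1 - s)) > 0) by (apply Rmult_gt_0_compat; lra).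
  replace (exp s * (exp (- s) * (1 + s) - exp s * (1 - s))) with
    ((exp s * exp (- s)) * (1 + s) - exp s * exp s * (1 - s)) in H0 by ring.
  rewrite Es, <- Et in H0. unfold s in H0. lra.
Qed.

Lemma fbar_bounds (t : R) : 0 < t -> 0 < fbar t < 1 / 2.
Proof.
  intro Ht. unfold fbar.
  assert (He : 1 + t < exp t) by (apply exp_ineq1; lra).
  pose proof (key_ineq t Ht).
  split.
  - replace (1 / (exp t - 1) - 1 / t + 1 / 2) with
      ((t + 2 - exp t * (2 - t)) / (2 * t * (exp t - 1))) by (field; lra).
    apply Rdiv_lt_0_compat; [lra|]. apply Rmult_lt_0_compat; lra.
  - assert (1 / (exp t - 1) < 1 / t).
    { unfold Rdiv. rewrite !Rmult_1_l. apply Rinv_lt_contravar; [apply Rmult_lt_0_compat|]; lra. }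
    lra.
Qed.

Lemma abstract_equiv (x f : R) : 0 < f < 1 / 2 ->
  (floor (x - 1 / 2 + f) <> floor (x - 1 / 2)) <->
  (frac (2 * x) >= 1 - 2 * f /\ frac x < 1 - f).
Proof.
  intros Hf. unfold frac.
  pose proof (floor_spec x) as Hx. set (k := floor x) in *.
  destruct (Rlt_or_le (x - IZR k) (1 / 2)) as [Hr | Hr].
  - assert (E2 : floor (2 * x) = (2 * k)%Z) by (apply floor_unique; rewrite mult_IZR; lra).
    assert (E1 : floor (x - 1 / 2) = (k - 1)%Z) by (apply floor_unique; rewrite minus_IZR; lra).
    rewrite E2, E1, mult_IZR.
    destruct (Rlt_or_le (x - IZR k) (1 / 2 - f)) as [Hq | Hq].
    + assert (E3 : floor (x - 1 / 2 + f) = (k - 1)%Z) by (apply floor_unique; rewrite minus_IZR; lra).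
      rewrite E3. split; [intro H; exfalso; apply H; reflexivity | intros [H _]; lra].
    + assert (E3 : floor (x - 1 / 2 + f) = k) by (apply floor_unique; lra).
      rewrite E3. split; [intros _; split; lra | intros _; lia].
  - assert (E2 : floor (2 * x) = (2 * k + 1)%Z) by (apply floor_unique; rewrite plus_IZR, mult_IZR; lra).
    assert (E1 : floor (x - 1 / 2) = k) by (apply floor_unique; lra).
    assert (E3 : floor (x - 1 / 2 + f) = k) by (apply floor_unique; lra).
    rewrite E2, E1, E3, plus_IZR, mult_IZR.
    split; [intro H; exfalso; apply H; reflexivity | intros [H1 H2]; lra].
Qed.

Theorem mainTheorem11 (theta : R) (n : nat) (Htheta : 1 < theta) (Hn : (0 < n)%nat) :
  inA theta n <->
  (frac (2 * INR n / ln theta) >= 1 - 2 * fbar (ln theta / INR n) /\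
   frac (INR n / ln theta) < 1 - fbar (ln theta / INR n)).
Proof.
  assert (Hl : 0 < ln theta) by (rewrite <- ln_1; apply ln_increasing; lra).
  assert (HN : 0 < INR n) by (apply lt_0_INR; exact Hn).
  set (t := ln theta / INR n).
  assert (Ht : 0 < t) by (unfold t; apply Rdiv_lt_0_compat; lra).
  pose proof (fbar_bounds t Ht) as Hf.
  replace (2 * INR n / ln theta) with (2 * (INR n / ln theta)) by (field; lra).
  rewrite <- (abstract_equiv (INR n / ln theta) (fbar t) Hf).
  unfold inA, Mprime.
  replace (1 / (Rpower theta (1 / INR n) - 1)) with (INR n / ln theta - 1 / 2 + fbar t).
  { tauto. }
  unfold fbar, Rpower.
  replace (1 / INR n * ln theta) with t by (unfold t; field; lra).
  replace (1 / t) with (INR n / ln theta) by (unfold t; field; lra).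
  ring.
Qed.
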